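(* Let $\mathcal P$ be a pre-Hahn-localizable family of probability measures on $(\Omega,\mathcal F)$ with a localization $\mathcal Q$ whose supports are pairwise disjoint, and let $\mathcal H_{\mathcal F}^{\mathcal Q}$ be its Hahn-extension. For $\mu\in\mathrm{ca}(\mathcal P)$ and $P\in\mathcal P$ we have $\mu\ll P$ if and only if $\mu^{\mathcal Q}\ll P^{\mathcal Q}$.
   Context: $\mathrm{ca}(\mathcal P)$ is the set of finite signed measures $\mu$ on $\mathcal F$ with $|\mu|\ll P$ for some $P\in\mathcal P$; for signed $\mu$, $\mu\ll P$ means $|\mu|\ll P$. $\mathcal A\lll\mathcal B$ means every $A\in\mathcal A$ is absolutely continuous w.r.t. some $B\in\mathcal B$; $\mathrm{sconv}$ denotes countable convex combinations. $\mathcal P$ is pre-Hahn-localizable with localization $\mathcal Q$ and supports $S_Q\in\mathcal F$ if $Q(S_R)=\delta_{QR}$ for $Q,R\in\mathcal Q$ and $\mathcal Q\lll\mathcal P\lll\mathrm{sconv}(\mathcal Q)$. Hahn-extension: $\mathcal H_{\mathcal F}^{\mathcal Q}=\sigma\big(\mathcal F\cup\{\bigcup_{Q}E_Q:E_Q\in\mathcal F,E_Q\subseteq S_Q\}\big)$. For $\mu\in\mathrm{ca}(\mathcal P)$, $\mathcal Q(\mu)=\{Q:|\mu|(S_Q)>0\}$ (countable) and $\mu^{\mathcal Q}(A)=\sum_{Q\in\mathcal Q(\mu)}\mu(A\cap S_Q)$ for $A\in\mathcal H_{\mathcal F}^{\mathcal Q}$, a finite signed measure extending $\mu$. *)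

(* Defs.v *)
From HB Require Import structures.
From mathcomp Require Import all_boot all_order all_algebra.
From mathcomp Require Import all_classical all_reals all_analysis charge.
Set Implicit Arguments. Unset Strict Implicit. Unset Printing Implicit Defensive.
Import Order.TTheory GRing.Theory Num.Theory.
Local Open Scope classical_set_scope.
Local Open Scope ring_scope.
Local Open Scope ereal_scope.

Section Defs.
Context {d : measure_display} {T : measurableType d} {R : realType}.

Definition variation (nu : set T -> \bar R) (A : set T) : \bar R :=
  ereal_sup [set x | exists (n : nat) (B : nat -> set T),
    [/\ (forall i, (i < n)%N -> measurable (B i)),
        trivIset `I_n B,
        \big[setU/set0]_(i < n) B i = A &
        x = \sum_(i < n) `|nu (B i)| ]].

Definition abs_cont (nu m : set T -> \bar R) : Prop :=
  forall A, measurable A -> m A = 0 -> variation nu A = 0.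

Definition mfam (PP : set (probability T R)) : set (set T -> \bar R) :=
  [set (P : set T -> \bar R) | P in PP].

Definition lll (AA BB : set (set T -> \bar R)) : Prop :=
  forall a, AA a -> exists2 b, BB b & abs_cont a b.

Definition sconv (QQ : set (probability T R)) : set (set T -> \bar R) :=
  [set m | exists (lam : nat -> R) (q : nat -> probability T R),
    [/\ (forall n, QQ (q n)), (forall n, (0 <= lam n)%R),
        \sum_(n <oo) (lam n)%:E = 1 &
        m = fun A => \sum_(n <oo) ((lam n)%:E * q n A)]].

Definition pre_hahn_localizable (PP QQ : set (probability T R))
    (S : probability T R -> set T) : Prop :=
  [/\ (forall Q, QQ Q -> measurable (S Q)),
      (forall Q Q', QQ Q -> QQ Q' -> Q = Q' -> Q (S Q') = 1),
      (forall Q Q', QQ Q -> QQ Q' -> Q <> Q' -> Q (S Q') = 0),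
      lll (mfam QQ) (mfam PP) &
      lll (mfam PP) (sconv QQ)].

Definition in_ca (PP : set (probability T R)) (nu : set T -> \bar R) : Prop :=
  exists2 P, PP P & abs_cont nu (P : set T -> \bar R).

Definition Hgen (QQ : set (probability T R)) (S : probability T R -> set T)
  : set (set T) :=
  [set A | measurable A \/
    exists E : probability T R -> set T,
      (forall Q, QQ Q -> measurable (E Q) /\ E Q `<=` S Q) /\
      A = \bigcup_(Q in QQ) E Q].

(* Omega equipped with the Hahn-extension sigma-algebra *)
Definition HT (QQ : set (probability T R)) (S : probability T R -> set T) :=
  g_sigma_algebraType (Hgen QQ S).

Definition ssum (I : choiceType) (D : set I) (f : I -> \bar R) : \bar R :=
  esum D f^\+ - esum D f^\-.

Definition Qof (QQ : set (probability T R)) (S : probability T R -> set T)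
  (nu : set T -> \bar R) : set {classic (probability T R)} :=
  [set Q | QQ Q /\ 0 < variation nu (S Q)].

Definition hext (QQ : set (probability T R)) (S : probability T R -> set T)
  (nu : set T -> \bar R) : set (HT QQ S) -> \bar R :=
  fun A => ssum (Qof QQ S nu) (fun Q : {classic (probability T R)} => nu (A `&` S Q)).

End Defs.

Arguments hext {d T R} QQ S nu _.
Arguments HT {d T R} QQ S.
Arguments Qof {d T R} QQ S nu _.
Arguments Hgen {d T R} QQ S _.

(* Main.v *)
Require Import Defs.
From HB Require Import structures.
From mathcomp Require Import all_boot all_order all_algebra.
From mathcomp Require Import all_classical all_reals all_analysis charge.
Import Order.TTheory GRing.Theory Num.Theory.
Import Order.TTheory GRing.Theory Num.Theory.
Local Open Scope classical_set_scope.
Local Open Scope ereal_scope.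

Section var.
Context {d : measure_display} {T : measurableType d} {R : realType}.
Implicit Types (nu : set T -> \bar R).

Lemma var_ge nu A B : measurable A -> measurable B -> B `<=` A ->
  abse (nu B) <= Defs.variation nu A.
Proof.
move=> mA mB BA.
pose F := fun i : nat => if i == 0%N then B else A `\` B.
have H : \sum_(i < 2) `|nu (F i)| <= Defs.variation nu A.
  apply: ereal_sup_ubound; exists 2%N, F.
  split => //.
  - by move=> [|[|i]] _ //=; exact: measurableD.
  - move=> i j /= hi hj [x [Fi Fj]].
    case: i hi Fi => [|[|i]] // hi Fi; case: j hj Fj => [|[|j]] // hj Fj;
      rewrite /F /= in Fi Fj.
    + by case: Fj.
    + by case: Fi.
  - by rewrite big_ord_recr big_ord_recr big_ord0 /= set0U setDUK.
apply: le_trans H.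
by rewrite big_ord_recr big_ord_recr big_ord0 /= add0e leeDl.
Qed.

Lemma var0 nu A : measurable A ->
  (forall B, measurable B -> B `<=` A -> nu B = 0) -> Defs.variation nu A = 0.
Proof.
move=> mA h; apply/eqP; rewrite eq_le; apply/andP; split; last first.
  have H := var_ge nu A A mA mA (@subset_refl _ A).
  by apply: le_trans H.
apply: ge_ereal_sup => x [n [B [mB _ UB ->]]].
rewrite big1 // => i _; rewrite h ?abse0 //; first exact: mB.
by rewrite -UB; exact: bigsetU_sup.
Qed.

End var.

Lemma esum_single (R : realType) (I : choiceType) (D : set I) (g : I -> \bar R) q :
  D q -> (forall i, D i -> 0 <= g i) -> (forall i, D i -> i <> q -> g i = 0) ->
  esum D g = g q.
Proof.
move=> Dq g0 gq; rewrite (esumID [set q]) //.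
rewrite [X in _ + X]esum1 ?adde0; last by move=> i [Di /= niq]; apply: gq.
have -> : D `&` [set q] = [set q] by apply/seteqP; split=> x /= => [[_ ->] | ->].
by rewrite esum_set1 // g0.
Qed.

Lemma ssum_single (R : realType) (I : choiceType) (D : set I) (f : I -> \bar R) q :
  D q -> (forall i, D i -> i <> q -> f i = 0) -> ssum D f = f q.
Proof.
move=> Dq fq; rewrite /ssum.
have -> : esum D f^\+ = f^\+ q.
  apply: esum_single => // i Di iq; by rewrite funeposE fq // maxxx.
have -> : esum D (funeneg f) = funeneg f q.
  apply: esum_single => // i Di iq; by rewrite funenegE fq // oppe0 maxxx.
by rewrite [in RHS](funeposneg f).
Qed.

Lemma ssum0 (R : realType) (I : choiceType) (D : set I) (f : I -> \bar R) :
  (forall i, D i -> f i = 0) -> ssum D f = 0.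
Proof.
move=> f0; rewrite /ssum !esum1 ?sube0 // => i Di.
- by rewrite funenegE f0 // oppe0 maxxx.
- by rewrite funeposE f0 // maxxx.
Qed.

Lemma ssum_ge0 (R : realType) (I : choiceType) (D : set I) (f : I -> \bar R) :
  (forall i, D i -> 0 <= f i) -> ssum D f = esum D f.
Proof.
move=> f0; rewrite /ssum [X in _ - X]esum1 ?sube0; last first.
  by move=> i Di; rewrite (ge0_funenegE f0) // inE.
by apply: eq_esum => i Di; rewrite (ge0_funeposE f0) // inE.
Qed.

Lemma esum_ge1 (R : realType) (I : choiceType) (D : set I) (f : I -> \bar R) q :
  D q -> f q <= esum D f.
Proof.
move=> Dq; apply: esum_ge; exists [set q]; last by rewrite fsbig_set1.
by split; [exact: finite_set1 | move=> x /= ->].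
Qed.

Section main.
Context (d : measure_display) (T : measurableType d) (R : realType)
  (QQ : set (probability T R)) (S : probability T R -> set T).

Lemma HT_of (A : set T) : measurable A -> measurable (A : set (HT QQ S)).
Proof. by move=> mA; apply: sub_sigma_algebra; left. Qed.

Lemma HT_restr (mS : forall Q, QQ Q -> measurable (S Q))
  (hdisj : forall Q Q', QQ Q -> QQ Q' -> Q <> Q' -> S Q `&` S Q' = set0)
  (A : set (HT QQ S)) : measurable A -> forall Q, QQ Q -> measurable (A `&` S Q : set T).
Proof.
move=> mA.
suff : <<s Hgen QQ S>> `<=` [set X : set T | forall Q, QQ Q -> measurable (X `&` S Q)].
  by apply.
apply: smallest_sub.
- split.
  + by move=> Q _; rewrite set0I.
  + move=> X hX Q hQ.
    have -> : (setT `\` X) `&` S Q = S Q `\` (X `&` S Q).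
      apply/seteqP; split=> x /=.
      * by move=> [[_ nX] SQx]; split => // -[].
      * by move=> [SQx nXS]; split => //; split => // Xx; apply: nXS.
    exact: measurableD (mS Q hQ) (hX Q hQ).
  + move=> F hF Q hQ; rewrite setI_bigcupl; apply: bigcupT_measurable => n.
    exact: hF.
- move=> X [mX | [E [hE ->]]] Q hQ.
  + exact: measurableI mX (mS Q hQ).
  + have -> : (\bigcup_(Q' in QQ) E Q') `&` S Q = E Q.
      apply/seteqP; split => x /=.
      * move=> [[Q' hQ' EQ'x] SQx].
        case: (pselect (Q' = Q)) => [<- //|nQ].
        have h := hdisj Q' Q hQ' hQ nQ.
        have : (S Q' `&` S Q) x by split => //; exact: (proj2 (hE Q' hQ')).
        by rewrite h.
      * move=> EQx; split; first by exists Q.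
        exact: (proj2 (hE Q hQ)).
    exact: (proj1 (hE Q hQ)).
Qed.

End main.

Lemma abse_le0_eq (R : realType) (x : \bar R) : `|x| <= 0 -> x = 0.
Proof. by move=> h; apply/eqP; rewrite -abse_eq0 eq_le h abse_ge0. Qed.

Theorem lemma4p4 (d : measure_display) (T : measurableType d) (R : realType)
  (PP QQ : set (probability T R)) (S : probability T R -> set T)
  (hloc : pre_hahn_localizable PP QQ S)
  (hdisj : forall Q Q', QQ Q -> QQ Q' -> Q <> Q' -> S Q `&` S Q' = set0)
  (mu : {charge set T -> \bar R}%R) (hmu : in_ca PP mu)
  (P : probability T R) (hP : PP P) :
  abs_cont mu (P : set T -> \bar R) <->
  @abs_cont _ (HT QQ S) R (hext QQ S mu) (hext QQ S P).
Proof.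
case: hloc => mS hS1 hS0 hQP hPQ.
have HR := @HT_restr d T R QQ S mS hdisj.
split.
- move=> hac A mA hPA.
  have hPAQ : forall Q, QQ Q -> P (A `&` S Q) = 0.
    move=> Q hQ; apply/eqP; rewrite eq_le measure_ge0 andbT.
    case: (pselect (Qof QQ S P Q)) => hq.
    + have h := @esum_ge1 R _ (Qof QQ S P) (fun Q => P (A `&` S Q)) Q hq.
      rewrite -ssum_ge0 in h; last by move=> i _; exact: measure_ge0.
      by rewrite -hPA; exact: h.
    + have hv : Defs.variation P (S Q) <= 0.
        by rewrite leNgt; apply/negP => h; apply: hq; split.
      have h1 := var_ge P (S Q) (S Q) (mS Q hQ) (mS Q hQ) (@subset_refl _ _).
      have h2 : P (A `&` S Q) <= P (S Q).
        by apply: le_measure; rewrite ?inE; [exact: HR | exact: mS | exact: subIsetr].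
      apply: (le_trans h2); apply: le_trans hv.
      by apply: le_trans h1; rewrite gee0_abs.
  apply: var0 => // B mB BA.
  rewrite /hext; apply: ssum0 => Q [hQ _].
  have mBQ := HR B mB Q hQ.
  have hPB : P (B `&` S Q) = 0.
    apply/eqP; rewrite eq_le measure_ge0 andbT -(hPAQ Q hQ).
    by apply: le_measure; rewrite ?inE; [exact: mBQ | exact: HR | exact: setSI].
  have hv := hac _ mBQ hPB.
  have := var_ge mu _ _ mBQ mBQ (@subset_refl _ _).
  by rewrite hv; exact: abse_le0_eq.
- move=> hac A mA hPA.
  have K : forall D, measurable D -> D `<=` A -> forall Q, QQ Q -> D `<=` S Q -> mu D = 0.
    move=> D mD DA Q hQ DS.
    have mDH := @HT_of d T R QQ S D mD.
    have hPD : hext QQ S P D = 0.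
      rewrite /hext; apply: ssum0 => Q' [hQ' _].
      apply/eqP; rewrite eq_le measure_ge0 andbT -hPA.
      apply: le_measure; rewrite ?inE; [exact: measurableI (mS Q' hQ') | exact: mA |].
      by move=> x [/DA].
    have hv := hac _ mDH hPD.
    have := var_ge (hext QQ S mu) _ _ mDH mDH (@subset_refl _ _).
    rewrite hv => /abse_le0_eq.
    case: (pselect (Qof QQ S mu Q)) => hq.
    + rewrite /hext (@ssum_single R _ _ _ Q hq).
        by rewrite setIidl.
      move=> Q' [hQ' _] nQ.
      have -> : D `&` S Q' = set0.
        apply/seteqP; split => x // [/DS SQx SQ'x].
        have : (S Q' `&` S Q) x by [].
        by rewrite hdisj.
      exact: charge0.
    + move=> _.
      have hv' : Defs.variation mu (S Q) <= 0.
        by rewrite leNgt; apply/negP => h; apply: hq; split.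
      apply: abse_le0_eq; apply: le_trans hv'.
      exact: var_ge mu _ _ (mS Q hQ) mD DS.
  case: hmu => P' hP' hmuP'.
  have [m [lam [q [hq hlam hsum ->]]] hP'm] := hPQ (P' : set T -> \bar R) (ex_intro2 _ _ P' hP' erefl).
  pose U := \bigcup_n S (q n).
  have mU : measurable U by apply: bigcupT_measurable => n; exact: mS.
  have hqU : forall n, q n (~` U) = 0.
    move=> n; apply/eqP; rewrite eq_le measure_ge0 andbT.
    have -> : 0 = q n (~` S (q n)).
      by rewrite probability_setC ?(hS1 _ _ (hq n) (hq n) erefl) ?subee //; exact: mS.
    apply: le_measure; rewrite ?inE; [exact: measurableC | apply: measurableC; exact: mS |].
    by apply: subsetC => x Sx; exists n.
  have hmU : (fun A => \sum_(n <oo) ((lam n)%:E * q n A)) (~` U) = 0.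
    by rewrite /= eseries0 // => n _ _; rewrite hqU mule0.
  have hP'U : P' (~` U) = 0.
    have hv := hP'm _ (measurableC mU) hmU.
    have := var_ge P' _ _ (measurableC mU) (measurableC mU) (@subset_refl _ _).
    by rewrite hv => /abse_le0_eq.
  apply: var0 => // C mC CA.
  rewrite -(setIT C) -(setUv U) setIUr chargeU; last 3 first.
  - exact: measurableI.
  - exact: measurableI mC (measurableC mU).
  - by apply/seteqP; split => x // [[_ Ux] [_ nUx]].
  have -> : mu (C `&` ~` U) = 0.
    have hP'C : P' (C `&` ~` U) = 0.
      apply/eqP; rewrite eq_le measure_ge0 andbT -hP'U.
      apply: le_measure; rewrite ?inE; [exact: measurableI mC (measurableC mU) | exact: measurableC |].
      exact: subIsetr.
    have mCU : measurable (C `&` ~` U) by exact: measurableI mC (measurableC mU).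
    have hv := hmuP' _ mCU hP'C.
    have := var_ge mu _ _ mCU mCU (@subset_refl _ _).
    by rewrite hv => /abse_le0_eq.
  rewrite adde0.
  pose F := fun n => C `&` S (q n).
  have mF : forall n, measurable (F n) by move=> n; apply: measurableI mC (mS _ (hq n)).
  have eCU : C `&` U = \bigcup_n seqDU F n by rewrite -seqDU_bigcup_eq /F setI_bigcupr.
  rewrite eCU.
  have mG := seqDU_measurable mF.
  have h := charge_semi_sigma_additive (s := mu) (seqDU F) mG (@trivIset_seqDU _ F)
    (bigcupT_measurable _ mG).
  have G0 : forall n, mu (seqDU F n) = 0.
    move=> n; apply: (K _ (mG n)).
    + by move=> x hx; have [/CA] := subset_seqDU hx.
    + exact: (hq n).
    + by move=> x hx; have [] := subset_seqDU hx.
  rewrite (_ : (fun n => _) = fun _ => 0) in h; last first.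
    by apply/funext => n; rewrite big1 // => i _; exact: G0.
  exact: (cvg_unique _ h (cvg_cst _)).
Qed.
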